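(* Assume the setting described in the context. Then for all $t\in\{1,\ldots,T\}$, $x_0,x_t\in\mathbb{R}^d$ it holds that $$p^\emptyset_{t\mid 0}(x_t\mid x_0)=\mathcal N\big(x_t,\sqrt{\bar\alpha_t}\,x_0,(1-\bar\alpha_t)\mathrm I_d\big).$$
   Context: Let $d,\mathfrak d,T\in\mathbb{N}$ and let $(\Omega,\mathcal F,\mathbb P)$ be a probability space. For every $\theta\in\mathbb{R}^{\mathfrak d}\cup\{\emptyset\}$ let $X^\theta=(X^\theta_t)_{t\in\{0,1,\ldots,T\}}$ be an $\mathbb{R}^d$-valued stochastic process on $\Omega$, and assume that $(X^\theta)_{\theta\in\mathbb{R}^{\mathfrak d}}$ and $X^\emptyset$ are independent. For every $\theta\in\mathbb{R}^{\mathfrak d}\cup\{\emptyset\}$ let $p^\theta\colon(\mathbb{R}^d)^{T+1}\to(0,\infty)$ be measurable with $\mathbb P(X^\theta_0\in B_0,\ldots,X^\theta_T\in B_T)=\int_{B_0}\cdots\int_{B_T}p^\theta(x_0,\ldots,x_T)\,dx_0\cdots dx_T$ for all Borel sets $B_0,\ldots,B_T\subseteq\mathbb{R}^d$. For distinct $a_1,\ldots,a_S\in\{0,\ldots,T\}$ ($S\le T$) let $p^\theta_{a_1,\ldots,a_S}$ be the marginal density obtained by integrating $p^\theta(x_0,\ldots,x_T)$ over the remaining variables (and $p^\theta_{0,\ldots,T}=p^\theta$); for distinct $a_1,\ldots,a_S,b_1,\ldots,b_K\in\{0,\ldots,T\}$ with $S,K\in\{1,\ldots,T\}$ define $p^\theta_{a_1,\ldots,a_S\mid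 b_1,\ldots,b_K}(x_{a_1},\ldots,x_{a_S}\mid x_{b_1},\ldots,x_{b_K})=\frac{p^\theta_{a_1,\ldots,a_S,b_1,\ldots,b_K}(x_{a_1},\ldots,x_{b_K})}{p^\theta_{b_1,\ldots,b_K}(x_{b_1},\ldots,x_{b_K})}$. Let $\Pi\colon\mathbb{R}^d\to(0,\infty)$ with $p^\theta_T=\Pi$ for all $\theta\in\mathbb{R}^{\mathfrak d}$ (no Markov assumption is made). Let $\mathrm I_d$ be the identity and $\mathcal N(x,v,Q)=(2\pi)^{-d/2}\det(Q)^{-1/2}\exp(-\frac12(x-v)^\top Q^{-1}(x-v))$ for symmetric positive definite $Q$. Let $\sigma_1,\ldots,\sigma_T,\bar\alpha_1,\ldots,\bar\alpha_T\in(0,1)$ satisfy $\sigma_t^2\le1-\bar\alpha_{t-1}$ for all $t\in\{2,\ldots,T\}$. For every $\theta\in\mathbb{R}^{\mathfrak d}$ let $V^\theta\colon\mathbb{R}^d\times\{1,\ldots,T\}\to\mathbb{R}^d$ be a function and let $f^\theta\colon\mathbb{R}^d\times\{1,\ldots,T\}\to\mathbb{R}^d$ satisfy $f^\theta(x,t)=(\sqrt{\bar\alpha_t})^{-1}\big(x-\sqrt{1-\bar\alpha_t}\,V^\theta(x,t)\big)$. Assume for all $\theta\in\mathbb{R}^{\mathfrak d}$, $t\in\{2,\ldots,T\}$, $x_0,\ldots,x_T\in\mathbb{R}^d$: $p^\emptyset_{1,\ldots,T\mid 0}(x_1,\ldots,x_T\mid x_0)=p^\emptyset_{T\mid 0}(x_T\mid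 x_0)\prod_{s=2}^T p^\emptyset_{s-1\mid s,0}(x_{s-1}\mid x_s,x_0)$; $p^\emptyset_{T\mid 0}(x_T\mid x_0)=\mathcal N(x_T,\sqrt{\bar\alpha_T}x_0,(1-\bar\alpha_T)\mathrm I_d)$; $p^\emptyset_{t-1\mid t,0}(x_{t-1}\mid x_t,x_0)=\mathcal N\Big(x_{t-1},\sqrt{\bar\alpha_{t-1}}x_0+\sqrt{1-\bar\alpha_{t-1}-\sigma_t^2}\,\frac{x_t-\sqrt{\bar\alpha_t}x_0}{\sqrt{1-\bar\alpha_t}},\sigma_t^2\mathrm I_d\Big)$; $p^\theta(x_0,\ldots,x_T)=p^\theta_T(x_T)\prod_{s=1}^T p^\theta_{s-1\mid s}(x_{s-1}\mid x_s)$; $p^\theta_{t-1\mid t}(x_{t-1}\mid x_t)=p^\emptyset_{t-1\mid t,0}(x_{t-1}\mid x_t,f^\theta(x_t,t))$; and $p^\theta_{0\mid 1}(x_0\mid x_1)=\mathcal N(x_0,f^\theta(x_1,1),\sigma_1^2\mathrm I_d)$. *)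

(* Defs.v *)
From HB Require Import structures.
From mathcomp Require Import all_boot all_order all_algebra.
From mathcomp Require Import all_classical all_reals all_analysis.
Set Implicit Arguments. Unset Strict Implicit. Unset Printing Implicit Defensive.
Import Order.TTheory GRing.Theory Num.Theory.
Import numFieldNormedType.Exports.
Local Open Scope classical_set_scope.
Local Open Scope ring_scope.

Section Defs.
Variable R : realType.

Definition borel (X : topologicalType) : set (set X) := <<s open >>.

Definition borel_fun (X : topologicalType) (f : X -> R) : Prop :=
  forall B : set R, measurable B -> borel (f @^-1` B).

Definition cons_rv n (a : R) (y : 'rV[R]_n) : 'rV[R]_n.+1 :=
  \row_(i < n.+1) match unlift ord0 i with Some j => y 0 j | None => a end.

(* Lebesgue integral over R^n (iterated one-dimensional Lebesgue integrals;
   for nonnegative measurable integrands this is the Lebesgue integral on R^n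
   by Tonelli). *)
Fixpoint intRV (n : nat) : ('rV[R]_n -> \bar R) -> \bar R :=
  match n as n0 return ('rV[R]_n0 -> \bar R) -> \bar R with
  | 0 => fun f => f 0
  | n'.+1 => fun f =>
      (\int[@lebesgue_measure R]_a intRV (fun y => f (cons_rv a y)))%E
  end.

Definition set_row m d (i : 'I_m) (v : 'rV[R]_d) (x : 'M[R]_(m, d)) :
  'M[R]_(m, d) := \matrix_(k, j) if k == i then v 0 j else x k j.

Fixpoint int_rows m d (s : seq 'I_m) (g : 'M[R]_(m, d) -> \bar R)
    (x : 'M[R]_(m, d)) : \bar R :=
  match s with
  | [::] => g x
  | i :: s' => intRV (fun v => int_rows s' g (set_row i v x))
  end.

(* A point (x_0, ..., x_T) of (R^d)^(T+1) is a matrix x : 'M_(T+1, d) whose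
   row t is x_t.  The marginal density p_{a_1..a_S} (A = {a_1,..,a_S}) is
   obtained by integrating p over the remaining variables; it is represented
   as a function of the full matrix x that only depends on the rows in A. *)
Definition marg m d (p : 'M[R]_(m, d) -> R) (A : {set 'I_m})
    (x : 'M[R]_(m, d)) : \bar R :=
  int_rows (enum (~: A)) (fun y => (p y)%:E) x.

Definition cond m d (p : 'M[R]_(m, d) -> R) (A B : {set 'I_m})
    (x : 'M[R]_(m, d)) : R :=
  fine (marg p (A :|: B) x) / fine (marg p B x).

Definition gauss d (x v : 'rV[R]_d) (Q : 'M[R]_d) : R :=
  (Num.sqrt ((2 * pi) ^+ d * \det Q))^-1 *
  expR (- (1 / 2) * ((x - v) *m invmx Q *m (x - v)^T) 0 0).

Definition is_joint_density (dO : measure_display) (O : measurableType dO)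
    (P : probability O R) m d (X : 'I_m -> O -> 'rV[R]_d)
    (p : 'M[R]_(m, d) -> R) : Prop :=
  forall B : 'I_m -> set 'rV[R]_d, (forall t, borel (B t)) ->
    P [set w | forall t, B t (X t w)] =
    int_rows (enum 'I_m)
      (fun y => (p y * \1_[set z : 'M[R]_(m, d) | forall t, B t (row t z)] y)%:E)
      0.

End Defs.

(* Main.v *)
Require Import Defs.
From HB Require Import structures.
From mathcomp Require Import all_boot all_order all_algebra.
From mathcomp Require Import all_classical all_reals all_analysis.
From mathcomp Require Import normal_distribution measurable_realfun.
From mathcomp Require Import ring lra zify.
Import Order.TTheory GRing.Theory Num.Theory.
Import numFieldNormedType.Exports.
Local Open Scope classical_set_scope.
Local Open Scope ring_scope.
Set Implicit Arguments. Unset Strict Implicit.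

Section NP.
Variable R : realType.

Definition np (m q x : R) : R :=
  (Num.sqrt (q * pi *+ 2))^-1 * expR (- (x - m) ^+ 2 / (q *+ 2)).

Lemma np_normal (m q x : R) : 0 < q -> np m q x = normal_pdf m (Num.sqrt q) x.
Proof.
move=> q0; rewrite /normal_pdf sqrtr_eq0 leNgt q0 /= /normal_peak /normal_fun.
by rewrite sqr_sqrtr ?ltW.
Qed.

Lemma np_gt0 (m q x : R) : 0 < q -> 0 < np m q x.
Proof.
move=> q0; rewrite /np mulr_gt0 ?expR_gt0 // invr_gt0 sqrtr_gt0.
by rewrite mulrn_wgt0 // mulr_gt0 ?pi_gt0.
Qed.

Lemma np_ge0 (m q x : R) : 0 <= q -> 0 <= np m q x.
Proof.
move=> q0; rewrite /np mulr_ge0 ?expR_ge0 // invr_ge0 sqrtr_ge0.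
Qed.

Lemma measurable_np (m q : R) : 0 < q -> measurable_fun setT (np m q).
Proof.
move=> q0; rewrite (_ : np m q = normal_pdf m (Num.sqrt q)).
  exact: measurable_normal_pdf.
by apply/funext => x; rewrite np_normal.
Qed.

Lemma integral_np (m q : R) : 0 < q ->
  (\int[@lebesgue_measure R]_x (np m q x)%:E = 1)%E.
Proof.
move=> q0; under eq_integral do rewrite np_normal //.
exact: integral_normal_pdf.
Qed.

Lemma np_conv (q r a al m u w : R) : 0 < q -> 0 < r ->
  np m q w * np (al + a * w) r u =
  np (al + a * m) (r + a ^+ 2 * q) u *
  np ((m * r + a * q * (u - al)) / (r + a ^+ 2 * q))
     (q * r / (r + a ^+ 2 * q)) w.
Proof.
move=> q0 r0.
have D0 : 0 < r + a ^+ 2 * q by rewrite ltr_pwDl // mulr_ge0 ?sqr_ge0 // ltW.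
have pi0 := pi_gt0 R.
have q0' : q != 0 by rewrite gt_eqF.
have r0' : r != 0 by rewrite gt_eqF.
have D0' : r + a ^+ 2 * q != 0 by rewrite gt_eqF.
rewrite /np mulrACA [in RHS]mulrACA -!expRD -!invfM.
rewrite -sqrtrM; last by rewrite mulrn_wge0 // mulr_ge0 // ltW.
rewrite -sqrtrM; last by rewrite mulrn_wge0 // mulr_ge0 // ltW.
congr ((Num.sqrt _)^-1 * expR _).
  field; by rewrite D0'.
field; by rewrite q0' r0' D0'.
Qed.

End NP.


Section G.
Variable R : realType.

Lemma sqrtrX (x : R) n : 0 <= x -> Num.sqrt (x ^+ n) = Num.sqrt x ^+ n.
Proof.
move=> x0; elim: n => [|n IH]; first by rewrite !expr0 sqrtr1.
by rewrite !exprS sqrtrM // IH.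
Qed.

Lemma gauss_scalar n (u v : 'rV[R]_n) (q : R) : 0 < q ->
  gauss u v (q%:M) = \prod_(j < n) np (v 0 j) q (u 0 j).
Proof.
move=> q0.
rewrite /gauss det_scalar invmx_scalar mul_mx_scalar -scalemxAl mxE.
rewrite (_ : (2 * pi) ^+ n * q ^+ n = (q * pi *+ 2) ^+ n); last first.
  by rewrite -exprMn; congr (_ ^+ _); rewrite -mulr_natl; ring.
rewrite sqrtrX; last by rewrite mulrn_wge0 // mulr_ge0 ?ltW ?pi_gt0.
rewrite /np big_split /= prodr_const card_ord exprVn; congr (_ * _).
rewrite -expR_sum; congr expR.
rewrite !mxE mulr_sumr mulr_sumr; apply: eq_bigr => j _.
rewrite !mxE.
have q0' : q != 0 by rewrite gt_eqF.
by field.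
Qed.

Lemma gauss_gt0 n (u v : 'rV[R]_n) (q : R) : 0 < q -> 0 < gauss u v (q%:M).
Proof.
move=> q0; rewrite gauss_scalar //; apply: prodr_gt0 => j _; exact: np_gt0.
Qed.

Notation mu := (@lebesgue_measure R).

Lemma intRV_np n (c : R) (k m : 'I_n -> R) (q : R) : 0 < q -> 0 <= c ->
  (forall j, 0 <= k j) ->
  intRV (fun w : 'rV[R]_n => (c * \prod_j (k j * np (m j) q (w 0 j)))%:E) =
  (c * \prod_j k j)%:E.
Proof.
move=> q0; elim: n c k m => [|n IH] c k m c0 k0.
  by rewrite /= !big_ord0.
rewrite [intRV _]/=.
have H : forall a, intRV (fun y : 'rV[R]_n =>
    (c * \prod_j (k j * np (m j) q ((cons_rv a y) 0 j)))%:E) =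
    ((c * (k ord0 * np (m ord0) q a)) * \prod_(i < n) k (lift ord0 i))%:E.
  move=> a; rewrite -(IH _ (fun i => k (lift ord0 i)) (fun i => m (lift ord0 i))); last 2 first.
  - by rewrite mulr_ge0 // mulr_ge0 // np_ge0 // ltW.
  - by move=> j; apply: k0.
  congr intRV; apply/funext => y; congr EFin.
  rewrite big_ord_recl mulrA; congr (_ * _ * _).
    by rewrite /cons_rv mxE unlift_none.
  apply: eq_bigr => i _; by rewrite /cons_rv mxE liftK.
under eq_integral => a _ do rewrite H.
transitivity (\int[mu]_a ((c * k ord0 * \prod_(i < n) k (lift ord0 i))%:E *
   (np (m ord0) q a)%:E))%E.
  by apply: eq_integral => a _; rewrite -EFinM; congr EFin; ring.
rewrite ge0_integralZl //=.
- rewrite integral_np // mule1 big_ord_recl; congr EFin; ring.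
- by apply/measurable_EFinP; exact: measurable_np.
- by move=> x _; rewrite lee_fin np_ge0 // ltW.
- rewrite lee_fin mulr_ge0 // ?mulr_ge0 //; apply: prodr_ge0 => i _; exact: k0.
Qed.

Lemma intRV_mass n (c : R) (m : 'rV[R]_n) (q : R) : 0 < q -> 0 <= c ->
  intRV (fun w : 'rV[R]_n => (c * gauss w m (q%:M))%:E) = c%:E.
Proof.
move=> q0 c0.
transitivity (intRV (fun w : 'rV[R]_n =>
   (c * \prod_j ((fun _ => 1) j * np (m 0 j) q (w 0 j)))%:E)).
  congr intRV; apply/funext => w; rewrite gauss_scalar //.
  by congr (EFin (_ * _)); apply: eq_bigr => j _; rewrite mul1r.
by rewrite intRV_np // ?big1 ?mulr1 // => j; rewrite ler01.
Qed.

Lemma intRV_conv n (c q r a : R) (al m u : 'rV[R]_n) : 0 < q -> 0 < r ->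
  0 <= c ->
  intRV (fun w : 'rV[R]_n =>
     (c * (gauss w m (q%:M) * gauss u (al + a *: w) (r%:M)))%:E) =
  (c * gauss u (al + a *: m) ((r + a ^+ 2 * q)%:M))%:E.
Proof.
move=> q0 r0 c0.
have D0 : 0 < r + a ^+ 2 * q by rewrite ltr_pwDl // mulr_ge0 ?sqr_ge0 // ltW.
have q'0 : 0 < q * r / (r + a ^+ 2 * q) by rewrite divr_gt0 // mulr_gt0.
transitivity (intRV (fun w : 'rV[R]_n =>
   (c * \prod_j (np (al 0 j + a * m 0 j) (r + a ^+ 2 * q) (u 0 j) *
     np ((m 0 j * r + a * q * (u 0 j - al 0 j)) / (r + a ^+ 2 * q))
       (q * r / (r + a ^+ 2 * q)) (w 0 j)))%:E)).
  congr intRV; apply/funext => w; rewrite !gauss_scalar // -big_split /=.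
  congr (EFin (_ * _)); apply: eq_bigr => j _.
  by rewrite !mxE np_conv.
rewrite intRV_np //; last by move=> j; apply: np_ge0; apply: ltW.
by rewrite gauss_scalar //; congr (EFin (_ * _)); apply: eq_bigr => j _; rewrite !mxE.
Qed.

End G.


Section M.
Variable R : realType.

Lemma row_set_row_eq m d (i : 'I_m) (v : 'rV[R]_d) x :
  row i (set_row i v x) = v.
Proof. by apply/rowP => j; rewrite !mxE eqxx. Qed.

Lemma row_set_row_neq m d (i k : 'I_m) (v : 'rV[R]_d) x : k != i ->
  row k (set_row i v x) = row k x.
Proof. by move=> ki; apply/rowP => j; rewrite !mxE (negPf ki). Qed.

Lemma set_row_id m d (i : 'I_m) (v w : 'rV[R]_d) x :
  set_row i w (set_row i v x) = set_row i w x.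
Proof. by apply/matrixP => k l; rewrite !mxE; case: eqP. Qed.

Lemma set_rowC m d (i j : 'I_m) (v w : 'rV[R]_d) x : i != j ->
  set_row i v (set_row j w x) = set_row j w (set_row i v x).
Proof.
move=> ij; apply/matrixP => k l; rewrite !mxE.
case: (eqVneq k i) => [->|ki]; last by [].
by rewrite (negPf ij).
Qed.

Lemma int_rows_cat m d (s1 s2 : seq 'I_m) (g : 'M[R]_(m, d) -> \bar R) x :
  int_rows (s1 ++ s2) g x = int_rows s1 (int_rows s2 g) x.
Proof.
elim: s1 x => [|i s IH] x //=.
by congr intRV; apply/funext => w; rewrite IH.
Qed.

Lemma int_rows_set_row m d (s : seq 'I_m) (g : 'M[R]_(m, d) -> \bar R) x i v :
  i \in s -> int_rows s g (set_row i v x) = int_rows s g x.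
Proof.
elim: s x => [|j s IH] x //=.
rewrite in_cons => his.
congr intRV; apply/funext => w.
case: (eqVneq i j) => [->|ij]; first by rewrite set_row_id.
have his' : i \in s by move: his; rewrite (negPf ij).
by rewrite -(set_rowC _ _ _ ij) IH.
Qed.

Lemma int_rows_ext m d (s : seq 'I_m) (g g' : 'M[R]_(m, d) -> \bar R) x :
  (forall y, g y = g' y) -> int_rows s g x = int_rows s g' x.
Proof. by move=> H; have -> : g = g' by apply/funext. Qed.

End M.

Lemma enum_ord_inord n : enum 'I_n.+1 = map inord (iota 0 n.+1).
Proof.
rewrite -val_enum_ord -map_comp.
by rewrite (eq_map (g := id)) ?map_id // => i /=; rewrite inord_val.
Qed.

Lemma iota_split (T t : nat) : (1 <= t)%N -> (t <= T)%N ->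
  iota 0 T.+1 = [:: 0%N] ++ iota 1 t.-1 ++ [:: t] ++ iota t.+1 (T - t).
Proof.
move=> t1 tT.
rewrite (_ : T.+1 = 1 + (t.-1 + (1 + (T - t))))%N; last by lia.
rewrite iotaD iotaD iotaD.
rewrite (_ : (0 + 1 = 1)%N) // (_ : (1 + t.-1 = t)%N); last by lia.
by rewrite (_ : (t + 1 = t.+1)%N); last by lia.
Qed.

Lemma enum_compl2 T (t : 'I_T.+1) : (1 <= t)%N ->
  enum (~: ([set t] :|: [set ord0])) =
  map inord (iota 1 t.-1) ++ map inord (iota t.+1 (T - t)).
Proof.
move=> t1.
have tT : (t <= T)%N by rewrite -ltnS.
rewrite /enum_mem -enumT enum_ord_inord filter_map -map_cat; congr map.
rewrite (iota_split t1 tT).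
rewrite !filter_cat /=.
rewrite !inE.
have -> : (inord 0 : 'I_T.+1) == ord0 by apply/eqP/val_inj; rewrite /= inordK.
have -> : (inord t : 'I_T.+1) == t by apply/eqP/val_inj; rewrite /= inordK.
rewrite orbT /=.
congr cat.
  rewrite (eq_in_filter (a2 := predT)) ?filter_predT // => k.
  rewrite mem_iota => /andP [k1 k2] /=; rewrite !inE.
  apply/negP => /orP [] /eqP /(congr1 val) /=; rewrite inordK; lia.
rewrite (eq_in_filter (a2 := predT)) ?filter_predT // => k.
rewrite mem_iota => /andP [k1 k2] /=; rewrite !inE.
apply/negP => /orP [] /eqP /(congr1 val) /=; rewrite inordK; lia.
Qed.


Section D.
Variables (R : realType) (d T : nat) (sigma abar : nat -> R).
Hypothesis hsigma : forall t, (1 <= t <= T)%N -> 0 < sigma t < 1.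
Hypothesis habar : forall t, (1 <= t <= T)%N -> 0 < abar t < 1.
Hypothesis hsig_le : forall t, (2 <= t <= T)%N -> sigma t ^+ 2 <= 1 - abar t.-1.

Local Notation M := ('M[R]_(T.+1, d)).

Definition cc s := Num.sqrt (1 - abar s.-1 - sigma s ^+ 2) / Num.sqrt (1 - abar s).
Definition term s (y : M) :=
  gauss (row (inord s.-1) y)
    (Num.sqrt (abar s.-1) *: row ord0 y +
     cc s *: (row (inord s) y - Num.sqrt (abar s) *: row ord0 y))
    ((sigma s ^+ 2)%:M).
Definition mk k (y : M) :=
  gauss (row (inord k) y) (Num.sqrt (abar k) *: row ord0 y) ((1 - abar k)%:M).
Definition prodk k (y : M) := \prod_(2 <= s < k.+1) term s y.

Lemma inord_neq (a b : nat) : (a <= T)%N -> (b <= T)%N -> a != b ->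
  (inord a : 'I_T.+1) != inord b.
Proof.
move=> aT bT ab; apply/negP => /eqP /(congr1 val) /=.
by rewrite !inordK // => /eqP; rewrite (negPf ab).
Qed.

Lemma ord0_neq (a : nat) : (1 <= a <= T)%N -> (ord0 : 'I_T.+1) != inord a.
Proof.
move=> /andP [a1 aT]; apply/negP => /eqP /(congr1 val) /=.
rewrite !inordK //; lia.
Qed.

Ltac neqt := solve [apply: ord0_neq; lia | apply: inord_neq; lia |
  rewrite eq_sym; apply: ord0_neq; lia].

Lemma term_set_row s i v y : (2 <= s <= T)%N -> (1 <= i <= T)%N ->
  i != s -> i != s.-1 -> term s (set_row (inord i) v y) = term s y.
Proof.
move=> /andP [s2 sT] /andP [i1 iT] is1 is2.
by rewrite /term !row_set_row_neq //; neqt.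
Qed.

Lemma prodk_set_row k i v y : (k < i <= T)%N ->
  prodk k (set_row (inord i) v y) = prodk k y.
Proof.
move=> /andP [ki iT]; apply: eq_big_nat => s /andP [s2 sk].
apply: term_set_row; try lia.
Qed.

Lemma term_at s v y : (2 <= s <= T)%N ->
  term s (set_row (inord s) v y) =
  gauss (row (inord s.-1) y)
    ((Num.sqrt (abar s.-1) *: row ord0 y -
      cc s *: (Num.sqrt (abar s) *: row ord0 y)) + cc s *: v)
    ((sigma s ^+ 2)%:M).
Proof.
move=> /andP [s2 sT].
rewrite /term row_set_row_eq !row_set_row_neq; [|neqt|neqt].
set r0 := row ord0 y.
have E : Num.sqrt (abar s.-1) *: r0 + cc s *: (v - Num.sqrt (abar s) *: r0) =
  Num.sqrt (abar s.-1) *: r0 - cc s *: (Num.sqrt (abar s) *: r0) + cc s *: v.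
  by apply/rowP => j; rewrite !mxE; ring.
by rewrite E.
Qed.

Lemma cc_sqr s : (2 <= s <= T)%N ->
  sigma s ^+ 2 + cc s ^+ 2 * (1 - abar s) = 1 - abar s.-1.
Proof.
move=> hs.
have /andP [a0 a1] : 0 < abar s < 1 by apply: habar; lia.
have hle := hsig_le hs.
have sA : 0 <= 1 - abar s.-1 - sigma s ^+ 2 by rewrite subr_ge0.
have sB : 0 <= 1 - abar s by rewrite subr_ge0 ltW.
rewrite /cc expr_div_n !sqr_sqrtr //.
have B0 : 1 - abar s != 0 by rewrite subr_eq0 eq_sym lt_eqF.
field; exact B0.
Qed.

Lemma prodk_recr y k : (2 <= k <= T)%N -> prodk k y = prodk k.-1 y * term k y.
Proof.
move=> /andP [k2 _]; rewrite /prodk.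
have E : k.+1 = k.-1.+2 by lia.
rewrite E.
rewrite big_nat_recr.
  by rewrite (_ : k.-1.+1 = k)%N //; lia.
lia.
Qed.

Lemma term_gt0 s y : (1 <= s <= T)%N -> 0 < term s y.
Proof.
move=> hs; have /andP [s0 _] := hsigma hs.
by apply: gauss_gt0; rewrite exprn_gt0.
Qed.

Lemma prodk_ge0 k y : (k <= T)%N -> 0 <= prodk k y.
Proof.
move=> kT; rewrite /prodk big_nat_cond; apply: prodr_ge0 => s.
move=> /andP [/andP [s2 sk] _]; apply: ltW; apply: term_gt0; lia.
Qed.

Lemma prodk_gt0 k y : (k <= T)%N -> 0 < prodk k y.
Proof.
move=> kT; rewrite /prodk big_nat_cond; apply: prodr_gt0 => s.
move=> /andP [/andP [s2 sk] _]; apply: term_gt0; lia.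
Qed.

Notation mu := (@lebesgue_measure R).

Lemma inner (c : M -> R) (t : nat) : (1 <= t <= T)%N ->
  (forall i v y, i != ord0 -> c (set_row i v y) = c y) ->
  (forall y, 0 <= c y) ->
  forall j, (j <= T - t)%N -> forall x,
  int_rows (map inord (iota (T - j).+1 j))
    (fun y => (c y * (mk T y * prodk T y))%:E) x =
  (c x * (mk (T - j) x * prodk (T - j) x))%:E.
Proof.
move=> ht hc c0; elim => [|j IH] hj x; first by rewrite subn0.
rewrite (_ : (T - j.+1).+1 = T - j)%N; last by lia.
rewrite [iota _ _]/= [map _ _]/= [int_rows _ _ _]/=.
set k := (T - j)%N.
have k2 : (2 <= k <= T)%N by lia.
rewrite (_ : (T - j.+1 = k.-1)%N); last by lia.
transitivity (intRV (fun v : 'rV[R]_d => ((c x * prodk k.-1 x) *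
   (gauss v (Num.sqrt (abar k) *: row ord0 x) ((1 - abar k)%:M) *
    gauss (row (inord k.-1) x)
    ((Num.sqrt (abar k.-1) *: row ord0 x -
      cc k *: (Num.sqrt (abar k) *: row ord0 x)) + cc k *: v)
    ((sigma k ^+ 2)%:M)))%:E)).
  apply: (congr1 (@intRV R d)); apply/funext => v; rewrite IH; last by lia.
  apply: (congr1 EFin).
  rewrite hc; last neqt.
  rewrite (prodk_recr _ k2) prodk_set_row; last by lia.
  rewrite term_at // /mk row_set_row_eq row_set_row_neq; last neqt.
  ring.
have /andP [a0 a1] : 0 < abar k < 1 by apply: habar; lia.
have /andP [s0 s1] : 0 < sigma k < 1 by apply: hsigma; lia.
have hc0 : 0 <= c x * prodk k.-1 x.
  by apply: mulr_ge0; [exact: c0 | apply: prodk_ge0; lia].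
have hq : 0 < 1 - abar k by rewrite subr_gt0.
have hr : 0 < sigma k ^+ 2 by rewrite exprn_gt0.
rewrite intRV_conv //.
rewrite cc_sqr // /mk.
rewrite (_ : (_ - _ + _) = Num.sqrt (abar k.-1) *: row ord0 x); last first.
  by apply/rowP => i; rewrite !mxE; ring.
congr EFin; ring.
Qed.

Lemma chain (c : M -> R) (t : nat) : (t <= T)%N ->
  (forall i v y, (1 <= i < t)%N -> c (set_row (inord i) v y) = c y) ->
  (forall y, 0 <= c y) ->
  forall m, (1 <= m < t)%N -> forall (be a V : R) x, 0 < V ->
  int_rows (map inord (iota 1 m))
    (fun y => (c y * (prodk m y * gauss (row (inord m) y)
       (be *: row ord0 y + a *: row (inord t) y) (V%:M)))%:E) x = (c x)%:E.
Proof.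
move=> tT hc c0; elim => [//|m IH] hm be a V x V0.
case: m IH hm => [|m] IH hm.
  rewrite [iota _ _]/= [map _ _]/= [int_rows _ _ _]/=.
  transitivity (intRV (fun v : 'rV[R]_d =>
     (c x * gauss v (be *: row ord0 x + a *: row (inord t) x) (V%:M))%:E)).
    apply: (congr1 (@intRV R d)); apply/funext => v; apply: (congr1 EFin).
    rewrite hc; last by lia.
    rewrite /prodk big_geq // mul1r.
    by rewrite row_set_row_eq !row_set_row_neq; [|neqt|neqt].
  exact: intRV_mass.
rewrite (_ : iota 1 m.+2 = iota 1 m.+1 ++ [:: m.+2]); last by rewrite (_ : m.+2 = m.+1 + 1)%N ?iotaD // addn1.
rewrite map_cat int_rows_cat.
have hs := hsigma (t := m.+2).
have /andP [s0 _] : 0 < sigma m.+2 < 1 by apply: hs; lia.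
set be' := Num.sqrt (abar m.+1) - cc m.+2 * Num.sqrt (abar m.+2) + cc m.+2 * be.
set a' := cc m.+2 * a.
set V' := sigma m.+2 ^+ 2 + cc m.+2 ^+ 2 * V.
have V'0 : 0 < V'.
  by rewrite /V' ltr_pwDl ?exprn_gt0 // mulr_ge0 ?sqr_ge0 // ltW.
rewrite (@int_rows_ext _ _ _ _ _ (fun y => (c y * (prodk m.+1 y *
   gauss (row (inord m.+1) y) (be' *: row ord0 y + a' *: row (inord t) y)
     (V'%:M)))%:E)).
  by apply: IH => //; lia.
move=> y.
rewrite [map _ _]/= [int_rows _ _ _]/=.
transitivity (intRV (fun v : 'rV[R]_d => ((c y * prodk m.+1 y) *
   (gauss v (be *: row ord0 y + a *: row (inord t) y) (V%:M) *
    gauss (row (inord m.+1) y)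
    ((Num.sqrt (abar m.+1) *: row ord0 y -
      cc m.+2 *: (Num.sqrt (abar m.+2) *: row ord0 y)) + cc m.+2 *: v)
    ((sigma m.+2 ^+ 2)%:M)))%:E)).
  apply: (congr1 (@intRV R d)); apply/funext => v; apply: (congr1 EFin).
  rewrite hc; last by lia.
  rewrite (@prodk_recr _ m.+2); last by lia.
  rewrite prodk_set_row; last by lia.
  rewrite term_at; last by lia.
  rewrite row_set_row_eq !row_set_row_neq; [|neqt|neqt].
  ring.
have hc0 : 0 <= c y * prodk m.+1 y.
  by apply: mulr_ge0; [exact: c0 | apply: prodk_ge0; lia].
have hr : 0 < sigma m.+2 ^+ 2 by rewrite exprn_gt0.
rewrite intRV_conv //.
have E : Num.sqrt (abar m.+1) *: row ord0 y -
      cc m.+2 *: (Num.sqrt (abar m.+2) *: row ord0 y) +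
      cc m.+2 *: (be *: row ord0 y + a *: row (inord t) y) =
      be' *: row ord0 y + a' *: row (inord t) y.
  by apply/rowP => i; rewrite !mxE /be' /a'; ring.
by rewrite E mulrA.
Qed.

End D.


Unset Implicit Arguments.

Theorem lemma5p6 (R : realType) (d T : nat) (hd : (0 < d)%N) (hT : (0 < T)%N)
  (dO : measure_display) (O : measurableType dO) (P : probability O R)
  (X : 'I_T.+1 -> O -> 'rV[R]_d)
  (hX : forall t (B : set 'rV[R]_d), borel B -> measurable (X t @^-1` B))
  (p : 'M[R]_(T.+1, d) -> R)
  (hp_pos : forall x, 0 < p x) (hp_meas : borel_fun p)
  (hp_dens : is_joint_density P X p)
  (sigma abar : nat -> R)
  (hsigma : forall t, (1 <= t <= T)%N -> 0 < sigma t < 1)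
  (habar : forall t, (1 <= t <= T)%N -> 0 < abar t < 1)
  (hsig_le : forall t, (2 <= t <= T)%N -> sigma t ^+ 2 <= 1 - abar t.-1)
  (hfact : forall x : 'M[R]_(T.+1, d),
     cond p (~: [set ord0]) [set ord0] x =
     cond p [set ord_max] [set ord0] x *
     \prod_(s < T.+1 | (2 <= s)%N)
        cond p [set inord s.-1] [set inord s; ord0] x)
  (hT0 : forall x : 'M[R]_(T.+1, d),
     cond p [set ord_max] [set ord0] x =
     gauss (row ord_max x) (Num.sqrt (abar T) *: row ord0 x)
           ((1 - abar T)%:M))
  (hback : forall (t : 'I_T.+1) (x : 'M[R]_(T.+1, d)), (2 <= t)%N ->
     cond p [set inord t.-1] [set t; ord0] x =
     gauss (row (inord t.-1) x)
       (Num.sqrt (abar t.-1) *: row ord0 x +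
        (Num.sqrt (1 - abar t.-1 - sigma t ^+ 2) /
           Num.sqrt (1 - abar t)) *: (row t x - Num.sqrt (abar t) *: row ord0 x))
       ((sigma t ^+ 2)%:M)) :
  forall (t : 'I_T.+1) (x : 'M[R]_(T.+1, d)), (1 <= t)%N ->
    cond p [set t] [set ord0] x =
    gauss (row t x) (Num.sqrt (abar t) *: row ord0 x) ((1 - abar t)%:M).
Proof.
move=> t x ht.
pose m0 := fun y => fine (marg p [set ord0] y).
have m0_inv : forall i v y, i != ord0 -> m0 (set_row i v y) = m0 y.
  move=> i v y i0; rewrite /m0 /marg int_rows_set_row //.
  by rewrite mem_enum finset.in_setC finset.in_set1.
have mkT_gt0 : forall y : 'M[R]_(T.+1, d), 0 < mk abar T y.
  move=> y; have hTT : (1 <= T <= T)%N by rewrite hT leqnn.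
  have /andP [_ a1] := habar T hTT.
  have h1 : 0 < 1 - abar T by rewrite subr_gt0.
  exact: (gauss_gt0 _ _ h1).
have G_gt0 : forall y : 'M[R]_(T.+1, d), 0 < mk abar T y * prodk sigma abar T y.
  by move=> y; rewrite mulr_gt0 // (prodk_gt0 abar hsigma).
have Hp : forall y : 'M[R]_(T.+1, d), p y = m0 y * (mk abar T y * prodk sigma abar T y).
  move=> y; have := hfact y.
  rewrite hT0.
  rewrite (eq_bigr (fun s : 'I_T.+1 => term sigma abar s y)); last first.
    move=> s s2; rewrite inord_val (hback _ _ s2).
    by rewrite /term /cc inord_val.
  have -> : \prod_(s < T.+1 | (2 <= s)%N) term sigma abar s y = prodk sigma abar T y.
    by rewrite /prodk big_geq_mkord; apply: eq_bigl => s.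
  have -> : gauss (row ord_max y) (Num.sqrt (abar T) *: row ord0 y)
           ((1 - abar T)%:M) = mk abar T y.
    rewrite /mk; have -> // : (inord T : 'I_T.+1) = ord_max.
    by apply: val_inj; rewrite /= inordK.
  rewrite /cond.
  have -> : marg p (~: [set ord0] :|: [set ord0]) y = (p y)%:E.
    rewrite /marg (_ : ~: (~: [set ord0] :|: [set ord0]) = finset.set0).
      by rewrite enum_set0.
    by apply/setP => i; rewrite !inE orNb.
  rewrite -/(m0 y) /= => E.
  have m0n : m0 y != 0.
    apply/eqP => m00; move: E; rewrite m00 invr0 mulr0 => E.
    by move: (G_gt0 y); rewrite -E ltxx.
  by rewrite -E mulrC divfK.
have m0_gt0 : forall y, 0 < m0 y.
  move=> y; have G0 := G_gt0 y.
  have -> : m0 y = p y / (mk abar T y * prodk sigma abar T y).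
    by rewrite Hp mulfK // gt_eqF.
  by rewrite divr_gt0.
have tT : (t <= T)%N by rewrite -ltnS.
have ha : forall k, (1 <= k <= T)%N -> 0 < 1 - abar k.
  by move=> k hk; have /andP [_ a1] := habar k hk; rewrite subr_gt0.
have Hin : forall y, int_rows (map inord (iota t.+1 (T - t)))
    (fun z => (p z)%:E) y = (m0 y * (mk abar t y * prodk sigma abar t y))%:E.
  move=> y.
  rewrite (@int_rows_ext _ _ _ _ _
     (fun z => (m0 z * (mk abar T z * prodk sigma abar T z))%:E)); last first.
    by move=> z; rewrite -Hp.
  have := @inner R d T sigma abar hsigma habar hsig_le m0 t
    (ltac:(by rewrite ht tT)) m0_inv (fun z => ltW (m0_gt0 z)) (T - t)%N
    (leqnn _) y.
  by rewrite subKn.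
have Hnum : marg p ([set t] :|: [set ord0]) x = (m0 x * mk abar t x)%:E.
  rewrite /marg (enum_compl2 ht) int_rows_cat.
  rewrite (@int_rows_ext _ _ _ _ _ _ _ Hin).
  case: (eqVneq (val t) 1%N) => [t1|t2].
    rewrite t1 /= /prodk big_geq // mulr1.
    by [].
  have t2' : (2 <= t)%N by rewrite ltn_neqAle eq_sym t2 ht.
  have hsT : (1 <= t <= T)%N by rewrite ht tT.
  have /andP [s0 _] := hsigma t hsT.
  have V0 : 0 < sigma t ^+ 2 by rewrite exprn_gt0.
  rewrite (@int_rows_ext _ _ _ _ _ (fun y => ((m0 y * mk abar t y) *
     (prodk sigma abar t.-1 y *
      gauss (row (inord t.-1) y)
        ((Num.sqrt (abar t.-1) - cc sigma abar t * Num.sqrt (abar t)) *: row ord0 y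
         + cc sigma abar t *: row (inord t) y) ((sigma t ^+ 2)%:M)))%:E)).
    apply: (@chain R d T sigma abar hsigma (fun y => m0 y * mk abar t y) t tT).
    - move=> i v y hi.
      rewrite m0_inv; last by rewrite eq_sym; apply: ord0_neq; lia.
      rewrite /mk !row_set_row_neq //.
        by apply: ord0_neq; lia.
      by apply: inord_neq; lia.
    - move=> y; apply: ltW; apply: mulr_gt0 => //.
      by apply: gauss_gt0; apply: ha.
    - lia.
    - exact: V0.
  move=> y; apply: (congr1 EFin).
  rewrite (@prodk_recr R d T sigma abar y t); last by lia.
  rewrite /term.
  set r0 := row ord0 y.
  have E : Num.sqrt (abar t.-1) *: r0 + cc sigma abar t *:
       (row (inord t) y - Num.sqrt (abar t) *: r0) =
     (Num.sqrt (abar t.-1) - cc sigma abar t * Num.sqrt (abar t)) *: r0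
         + cc sigma abar t *: row (inord t) y.
    by apply/rowP => i; rewrite !mxE; ring.
  rewrite E; ring.
rewrite /cond Hnum /= -/(m0 x).
have m0n : m0 x != 0 by rewrite gt_eqF.
rewrite mulrAC divff // mul1r /mk inord_val.
by [].
Qed.
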